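(* Let $P\in\mathbb{N}_0^{n\times n}$ be an incidence matrix that is monomial (every row and every column has exactly one non-zero entry). If two of its entries are greater than $1$, then $P$ exclusively represents reducible morphisms.
   Context: Let $\Sigma=\{a_1,\dots,a_n\}$. A morphism $\varphi:\Sigma^+\to\Sigma^+$ (non-empty images) is Parikh-positive if every letter occurs in $\varphi(a_1)\cdots\varphi(a_n)$. Its incidence matrix is $P(\varphi)=(m_{i,j})$ with $m_{i,j}=|\varphi(a_j)|_{a_i}$. An automorphism is an injective morphism mapping each letter to a single letter; a morphism is reducible if it equals $\psi_2\circ\psi_1$ with neither $\psi_1,\psi_2$ an automorphism. An incidence matrix $P$ exclusively represents reducible morphisms if every Parikh-positive morphism $\varphi$ with $P(\varphi)=P$ is reducible. *)

(* Defs.v *)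
From mathcomp Require Import all_boot all_algebra.
Set Implicit Arguments. Unset Strict Implicit. Unset Printing Implicit Defensive.

(* Alphabet Sigma = {a_1,...,a_n} is 'I_n; words are seq 'I_n.
   A morphism Sigma^+ -> Sigma^+ is determined by the images of letters,
   which must be non-empty words. *)
Definition morph (n : nat) := 'I_n -> seq 'I_n.

Definition nonerasing n (phi : morph n) : Prop := forall a, phi a != [::].

Definition morph_word n (phi : morph n) (w : seq 'I_n) : seq 'I_n :=
  flatten (map phi w).

Definition morph_comp n (psi2 psi1 : morph n) : morph n :=
  fun a => morph_word psi2 (psi1 a).

Definition parikh_positive n (phi : morph n) : Prop :=
  forall b : 'I_n, b \in morph_word phi (enum 'I_n).

Definition incidence n (phi : morph n) : 'M[nat]_n :=
  \matrix_(i, j) count_mem i (phi j).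

Definition automorphism n (phi : morph n) : Prop :=
  (forall a, size (phi a) = 1) /\ injective phi.

Definition reducible n (phi : morph n) : Prop :=
  exists psi1 psi2 : morph n,
    [/\ nonerasing psi1, nonerasing psi2,
        ~ automorphism psi1, ~ automorphism psi2 &
        forall a, phi a = morph_comp psi2 psi1 a].

Definition exclusively_reducible n (P : 'M[nat]_n) : Prop :=
  forall phi : morph n, nonerasing phi -> parikh_positive phi ->
    incidence phi = P -> reducible phi.

Definition monomial n (P : 'M[nat]_n) : Prop :=
  (forall i, #|[set j | P i j != 0%N]| = 1%N) /\
  (forall j, #|[set i | P i j != 0%N]| = 1%N).

(* Main.v *)
Require Import Defs.
From mathcomp Require Import all_boot all_algebra.

Lemma flat_nseq (T : Type) (k : nat) (x : T) :
  flatten (nseq k [:: x]) = nseq k x.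
Proof. by elim: k => //= k ->. Qed.

Theorem proposition19 (n : nat) (P : 'M[nat]_n) :
  monomial P ->
  (exists i1 j1 i2 j2, (i1, j1) != (i2, j2) /\
     (1 < P i1 j1)%N /\ (1 < P i2 j2)%N) ->
  exclusively_reducible P.
Proof.
move=> [_ Hcol] [i1 [j1 [i2 [j2 [Hne [H1 H2]]]]]] phi Hne0 _ HP.
subst P. rewrite !mxE in H1 H2.
have [x Hx] : exists x, [set i | incidence phi i j1 != 0%N] = [set x].
  by apply/cards1P; rewrite Hcol.
have Hall : phi j1 = nseq (size (phi j1)) x.
  apply/all_pred1P/allP => y Hy.
  have : y \in [set i | incidence phi i j1 != 0%N].
    by rewrite inE mxE -lt0n -has_count has_pred1.
  by rewrite Hx inE.
have Hs : (1 < size (phi j1))%N by apply: leq_trans H1 (count_size _ _).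
have Hs2 : (1 < size (phi j2))%N by apply: leq_trans H2 (count_size _ _).
have Hj : j1 != j2.
  apply/eqP => Ej; subst j2.
  have : i1 \in [set i | incidence phi i j1 != 0%N].
    by rewrite inE mxE -lt0n (ltnW H1).
  have : i2 \in [set i | incidence phi i j1 != 0%N].
    by rewrite inE mxE -lt0n (ltnW H2).
  rewrite Hx !inE => /eqP E2 /eqP E1.
  by rewrite E1 E2 eqxx in Hne.
pose psi1 : morph n := fun a => if a == j1 then nseq (size (phi j1)) j1 else [:: a].
pose psi2 : morph n := fun a => if a == j1 then [:: x] else phi a.
exists psi1, psi2; split.
- move=> a; rewrite /psi1; case: ifP => _ //.
  by rewrite -size_eq0 size_nseq -lt0n (ltnW Hs).
- move=> a; rewrite /psi2; case: ifP => _ //.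
- move=> [Hsz _]; have := Hsz j1; rewrite /psi1 eqxx size_nseq => E.
  by rewrite E in Hs.
- move=> [Hsz _]; have := Hsz j2; rewrite /psi2 eq_sym (negbTE Hj) => E.
  by rewrite E in Hs2.
- move=> a; rewrite /morph_comp /morph_word /psi1.
  case: eqP => [->|Ha] /=.
  + rewrite map_nseq /psi2 eqxx flat_nseq. exact: Hall.
  + by rewrite /psi2 cats0 (introF eqP Ha).
Qed.
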